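(* Let $\Omega\subset\mathbb{R}^2$ be a bounded domain, $X\subset\overline{\Omega}$ finite with $X\setminus\partial\Omega\subset\mathrm{int}(\mathrm{conv}(X\cap\partial\Omega))$, $f_X$ a discrete load on $X$, $E_0,V_0>0$, and assume $\mathcal{Z}_X>0$. Let $(\mathbf{s},\mathbf{q},\mathbf{r})\in\mathbb{R}^{3\times m}$ solve $(\mathcal{P}_X)$ and $(\mathbf{u}_1,\mathbf{u}_2,\mathbf{w})\in\mathbb{R}^{3\times n}$ (with some slack vectors) solve $(\mathcal{P}_X^* )$. Then the pair $$\mathbf{z}=\tfrac12\mathbf{w},\qquad\mathbf{a}=\frac{V_0}{\mathcal{Z}_X}\mathbf{J}(\mathbf{z})\mathbf{s}$$ solves $(\mathrm{MCGS}_X)$ with $\mathcal{C}_{X,\min}=\frac{(\mathcal{Z}_X)^2}{2E_0V_0}$. Moreover, the vectors $$(\mathbf{u}_{1,el},\mathbf{u}_{2,el},\mathbf{w}_{el})=\frac{\mathcal{Z}_X}{E_0V_0}(\mathbf{u}_1,\mathbf{u}_2,\mathbf{w}),\qquad\hat{\mathbf{s}}=\mathbf{J}(\mathbf{z})\mathbf{s}$$ solve, respectively, the displacement-based problem defining $\mathcal{C}_X(\mathbf{z},\mathbf{a})$ and the stress-based problem for $(\mathbf{z},\mathbf{a})$. Each bar with $a_k\ne0$ undergoes the strain $\hat{\mathrm{e}}_k(\mathbf{u}_{1,el},\mathbf{u}_{2,el},\mathbf{w}_{el};\mathbf{z})=\mathcal{Z}_X/(E_0V_0)$, and for every bar $k$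 Hooke's law holds: $\hat s_k=(E_0a_k)\,\hat{\mathrm{e}}_k(\mathbf{u}_{1,el},\mathbf{u}_{2,el},\mathbf{w}_{el};\mathbf{z})$.
   Context: Discrete setting: $\bar n=\#X$, $n=\#(X\setminus\partial\Omega)$, enumeration $\chi:\{1,\dots,n\}\to X\setminus\partial\Omega$; $m=\bar n(\bar n-1)/2$, enumeration $k\mapsto\{\chi_-(k),\chi_+(k)\}$ of unordered pairs of distinct points of $X$. $f_i=f_X(\{\chi(i)\})$, $l_k=|\chi_+(k)-\chi_-(k)|$. Vectors in $\mathbb{R}^n$ are identified with functions on $X$ vanishing on $X\cap\partial\Omega$. $(\mathbf{B}_1\mathbf{u}_1+\mathbf{B}_2\mathbf{u}_2)_k=(u(\chi_+(k))-u(\chi_-(k)))\cdot(\chi_+(k)-\chi_-(k))/l_k$, $(\mathbf{D}\mathbf{w})_k=w(\chi_+(k))-w(\chi_-(k))$. $\mathrm{K}=\{(t_1,t_2,t_3):t_1,t_2\ge0,2t_1t_2\ge t_3^2\}$. $(\mathcal{P}_X)$: $\inf\{\mathbf{l}^\top\mathbf{s}+2\mathbf{l}^\top\mathbf{r}:\mathbf{s},\mathbf{r}\in\mathbb{R}^m_+,\mathbf{q}\in\mathbb{R}^m,\mathbf{B}_1^\top\mathbf{s}=\mathbf{B}_2^\top\mathbf{s}=\mathbf{0},\mathbf{D}^\top\mathbf{q}=\mathbf{f},(r_k,s_k,q_k)\in\mathrm{K}\ \forall k\}$; $(\mathcal{P}_X^* )$: $\sup\{\mathbf{f}^\top\mathbf{w}:\mathbf{t}_2+\mathbf{B}_1\mathbf{u}_1+\mathbf{B}_2\mathbf{u}_2=\mathbf{l},\mathbf{t}_3+\mathbf{D}\mathbf{w}=\mathbf{0},\mathbf{t}_1=2\mathbf{l},(t_{1;k},t_{2;k},t_{3;k})\in\mathrm{K}\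 \forall k\}$ over $\mathbf{u}_1,\mathbf{u}_2,\mathbf{w}\in\mathbb{R}^n$, $\mathbf{t}_1,\mathbf{t}_2\in\mathbb{R}^m_+$, $\mathbf{t}_3\in\mathbb{R}^m$; it is known $\min\mathcal{P}_X=\max\mathcal{P}_X^*=:\mathcal{Z}_X$. For $\mathbf{z}\in\mathbb{R}^n$: $\Delta_k(\mathbf{z})=(\mathbf{D}\mathbf{z})_k/l_k$, $\mathbf{J}(\mathbf{z})$ diagonal with $J_{kk}(\mathbf{z})=\sqrt{1+\Delta_k(\mathbf{z})^2}$, $\hat l_k(\mathbf{z})=J_{kk}(\mathbf{z})l_k$; $\mathrm{e}_k(\mathbf{u}_1,\mathbf{u}_2)=(\mathbf{B}_1\mathbf{u}_1+\mathbf{B}_2\mathbf{u}_2)_k/l_k$; $\hat{\mathrm{e}}_k(\mathbf{u}_1,\mathbf{u}_2,\mathbf{w};\mathbf{z})=(\mathrm{e}_k(\mathbf{u}_1,\mathbf{u}_2)+\Delta_k(\mathbf{z})\Delta_k(\mathbf{w}))/(1+\Delta_k(\mathbf{z})^2)$. Displacement-based compliance: $\mathcal{C}_X(\mathbf{z},\mathbf{a})=\sup_{\mathbf{u}_1,\mathbf{u}_2,\mathbf{w}}\{\mathbf{f}^\top\mathbf{w}-\frac{E_0}{2}\sum_k((\hat{\mathrm{e}}_k)_+)^2a_k\hat l_k(\mathbf{z})\}$. Stress-based problem: $\inf\{\frac{1}{2E_0}\sum_k\frac{\hat s_k^2}{a_k}\hat l_k(\mathbf{z}):\hat{\mathbf{s}}\in\mathbb{R}^m_+,\mathbf{B}_1^\top\mathbf{s}=\mathbf{B}_2^\top\mathbf{s}=\mathbf{0},\mathbf{D}^\top\mathbf{q}=\mathbf{f},s_k=\hat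 s_k/J_{kk}(\mathbf{z}),q_k=\Delta_k(\mathbf{z})\hat s_k/J_{kk}(\mathbf{z})\}$ (convention $0/0=0$, $c/0=+\infty$ for $c>0$), known to equal $\mathcal{C}_X(\mathbf{z},\mathbf{a})$. $(\mathrm{MCGS}_X)$: $\mathcal{C}_{X,\min}=\inf\{\mathcal{C}_X(\mathbf{z},\mathbf{a}):\mathbf{z}\in\mathbb{R}^n,\mathbf{a}\in\mathbb{R}^m_+,\sum_ka_k\hat l_k(\mathbf{z})\le V_0\}$. *)

(* Defs.v *)
From HB Require Import structures.
From mathcomp Require Import all_boot all_order all_algebra.
From mathcomp Require Import all_classical all_reals all_analysis.
Set Implicit Arguments. Unset Strict Implicit. Unset Printing Implicit Defensive.
Import Order.TTheory GRing.Theory Num.Theory.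
Import numFieldNormedType.Exports.
Local Open Scope classical_set_scope.
Local Open Scope ring_scope.

(* Points of X are indexed by 'I_nb (nb = #X) via an injective p : 'I_nb -> R*R.
   bd i  <=>  p i lies on the boundary of Omega.
   Vectors of R^n are functions 'I_nb -> R vanishing on boundary points.
   Bars (unordered pairs of distinct points) are indexed by pairs (i,j), i<j,
   with chi_-(k) = i and chi_+(k) = j. *)

Definition edge (nb : nat) := {ij : 'I_nb * 'I_nb | (ij.1 < ij.2)%N}.
Definition em {nb} (k : edge nb) : 'I_nb := (val k).1.
Definition ep {nb} (k : edge nb) : 'I_nb := (val k).2.

Section Defs.
Context {R : realType} {nb : nat}.
Implicit Types (p : 'I_nb -> R * R) (bd : 'I_nb -> bool) (f : 'I_nb -> R).

Definition vanish bd (u : 'I_nb -> R) := forall i, bd i -> u i = 0.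

Definition dx p (k : edge nb) := (p (ep k)).1 - (p (em k)).1.
Definition dy p (k : edge nb) := (p (ep k)).2 - (p (em k)).2.
Definition len p (k : edge nb) := Num.sqrt (dx p k ^+ 2 + dy p k ^+ 2).

Definition Bu p (u1 u2 : 'I_nb -> R) (k : edge nb) :=
  ((u1 (ep k) - u1 (em k)) * dx p k + (u2 (ep k) - u2 (em k)) * dy p k) / len p k.
Definition Dw (w : 'I_nb -> R) (k : edge nb) := w (ep k) - w (em k).

Definition incid (k : edge nb) (i : 'I_nb) : R :=
  (ep k == i)%:R - (em k == i)%:R.
Definition B1T p (s : edge nb -> R) (i : 'I_nb) :=
  \sum_(k : edge nb) s k * (dx p k / len p k) * incid k i.
Definition B2T p (s : edge nb -> R) (i : 'I_nb) :=
  \sum_(k : edge nb) s k * (dy p k / len p k) * incid k i.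
Definition DT (q : edge nb -> R) (i : 'I_nb) :=
  \sum_(k : edge nb) q k * incid k i.

Definition inK (t1 t2 t3 : R) := 0 <= t1 /\ 0 <= t2 /\ t3 ^+ 2 <= 2 * t1 * t2.

Definition PX_feas bd p f (s q r : edge nb -> R) :=
  (forall k, 0 <= s k) /\ (forall k, 0 <= r k) /\
  (forall i, ~~ bd i -> B1T p s i = 0) /\ (forall i, ~~ bd i -> B2T p s i = 0) /\
  (forall i, ~~ bd i -> DT q i = f i) /\
  (forall k, inK (r k) (s k) (q k)).
Definition PX_obj p (s r : edge nb -> R) :=
  \sum_(k : edge nb) len p k * s k + 2 * \sum_(k : edge nb) len p k * r k.
Definition PX_solves bd p f (s q r : edge nb -> R) :=
  PX_feas bd p f s q r /\
  forall s' q' r', PX_feas bd p f s' q' r' -> PX_obj p s r <= PX_obj p s' r'.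
Definition ZX bd p f : R :=
  inf [set x | exists s q r, PX_feas bd p f s q r /\ x = PX_obj p s r].

Definition PXd_feas bd p (u1 u2 w : 'I_nb -> R) (t1 t2 t3 : edge nb -> R) :=
  vanish bd u1 /\ vanish bd u2 /\ vanish bd w /\
  (forall k, 0 <= t1 k) /\ (forall k, 0 <= t2 k) /\
  (forall k, t2 k + Bu p u1 u2 k = len p k) /\
  (forall k, t3 k + Dw w k = 0) /\
  (forall k, t1 k = 2 * len p k) /\
  (forall k, inK (t1 k) (t2 k) (t3 k)).
Definition loadw bd f (w : 'I_nb -> R) := \sum_(i | ~~ bd i) f i * w i.
Definition PXd_solves bd p f (u1 u2 w : 'I_nb -> R) :=
  exists t1 t2 t3, PXd_feas bd p u1 u2 w t1 t2 t3 /\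
  forall u1' u2' w' t1' t2' t3', PXd_feas bd p u1' u2' w' t1' t2' t3' ->
    loadw bd f w' <= loadw bd f w.

Definition Delta p (z : 'I_nb -> R) (k : edge nb) := Dw z k / len p k.
Definition Jkk p (z : 'I_nb -> R) (k : edge nb) := Num.sqrt (1 + Delta p z k ^+ 2).
Definition lhat p (z : 'I_nb -> R) (k : edge nb) := Jkk p z k * len p k.
Definition strain p (u1 u2 : 'I_nb -> R) (k : edge nb) := Bu p u1 u2 k / len p k.
Definition ehat p (u1 u2 w z : 'I_nb -> R) (k : edge nb) :=
  (strain p u1 u2 k + Delta p z k * Delta p w k) / (1 + Delta p z k ^+ 2).

Definition disp_obj bd p f (E0 : R) (z : 'I_nb -> R) (a : edge nb -> R)
    (u1 u2 w : 'I_nb -> R) :=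
  loadw bd f w - E0 / 2 *
    \sum_(k : edge nb) (Num.max (ehat p u1 u2 w z k) 0) ^+ 2 * a k * lhat p z k.
Definition CX bd p f E0 (z : 'I_nb -> R) (a : edge nb -> R) : \bar R :=
  ereal_sup [set x | exists u1 u2 w, vanish bd u1 /\ vanish bd u2 /\ vanish bd w
                     /\ x = (disp_obj bd p f E0 z a u1 u2 w)%:E].
Definition disp_solves bd p f E0 (z : 'I_nb -> R) (a : edge nb -> R)
    (u1 u2 w : 'I_nb -> R) :=
  vanish bd u1 /\ vanish bd u2 /\ vanish bd w /\
  forall u1' u2' w', vanish bd u1' -> vanish bd u2' -> vanish bd w' ->
    disp_obj bd p f E0 z a u1' u2' w' <= disp_obj bd p f E0 z a u1 u2 w.

Definition stress_feas bd p f (z : 'I_nb -> R) (sh : edge nb -> R) :=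
  (forall k, 0 <= sh k) /\
  let s := fun k => sh k / Jkk p z k in
  let q := fun k => Delta p z k * sh k / Jkk p z k in
  (forall i, ~~ bd i -> B1T p s i = 0) /\ (forall i, ~~ bd i -> B2T p s i = 0) /\
  (forall i, ~~ bd i -> DT q i = f i).
(* term 1/(2E0) * sh_k^2/a_k * lhat_k with 0/0 = 0 and c/0 = +oo for c > 0 *)
Definition stress_term p (E0 : R) (z : 'I_nb -> R) (a sh : edge nb -> R)
    (k : edge nb) : \bar R :=
  if a k == 0 then (if sh k == 0 then 0%E else +oo%E)
  else ((sh k ^+ 2 / a k) * lhat p z k / (2 * E0))%:E.
Definition stress_obj p E0 z a sh : \bar R :=
  (\sum_(k : edge nb) stress_term p E0 z a sh k)%E.
Definition stress_solves bd p f E0 (z : 'I_nb -> R) (a sh : edge nb -> R) :=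
  stress_feas bd p f z sh /\
  forall sh', stress_feas bd p f z sh' ->
    (stress_obj p E0 z a sh <= stress_obj p E0 z a sh')%E.

Definition MCGS_feas bd p (V0 : R) (z : 'I_nb -> R) (a : edge nb -> R) :=
  vanish bd z /\ (forall k, 0 <= a k) /\
  \sum_(k : edge nb) a k * lhat p z k <= V0.
Definition Cmin bd p f E0 V0 : \bar R :=
  ereal_inf [set x | exists z a, MCGS_feas bd p V0 z a /\ x = CX bd p f E0 z a].
Definition MCGS_solves bd p f E0 V0 (z : 'I_nb -> R) (a : edge nb -> R) :=
  MCGS_feas bd p V0 z a /\
  forall z' a', MCGS_feas bd p V0 z' a' -> (CX bd p f E0 z a <= CX bd p f E0 z' a')%E.

Definition conv_pts (S : 'I_nb -> bool) p : set (R * R) :=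
  [set x | exists lam : 'I_nb -> R, (forall i, 0 <= lam i) /\
     (forall i, ~~ S i -> lam i = 0) /\ \sum_i lam i = 1 /\
     x = (\sum_i lam i * (p i).1, \sum_i lam i * (p i).2)].

End Defs.

(* Main.v *)
Require Import Defs.
From HB Require Import structures.
From mathcomp Require Import all_boot all_order all_algebra.
From mathcomp Require Import all_classical all_reals all_analysis.
From mathcomp Require Import ring lra.
Import Order.TTheory GRing.Theory Num.Theory.
Import numFieldNormedType.Exports.
Local Open Scope classical_set_scope.
Local Open Scope ring_scope.

Section Farkas.
Variables (R : realFieldType) (T : finType).

Definition fdot (x y : T -> R) := \sum_t x t * y t.

Lemma fdotBl (x y d : T -> R) c :
  fdot (fun t => x t - c * y t) d = fdot x d - c * fdot y d.
Proof.
rewrite /fdot mulr_sumr -sumrB; apply: eq_bigr => t _; ring.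
Qed.

Lemma fdotBr (x d e : T -> R) c :
  fdot x (fun t => d t - c * e t) = fdot x d - c * fdot x e.
Proof.
rewrite /fdot mulr_sumr -sumrB; apply: eq_bigr => t _; ring.
Qed.

Lemma farkas (I : eqType) (s : seq I) : uniq s -> forall (a : I -> T -> R) (b : T -> R),
  (exists mu : I -> R, (forall i, 0 <= mu i) /\
     forall t, b t = \sum_(i <- s) mu i * a i t)
  \/ (exists d, (forall i, i \in s -> fdot (a i) d <= 0) /\ 0 < fdot b d).
Proof.
elim: s => [|j s IH] /=.
  move=> _ a b.
  case: (boolP [forall t, b t == 0]) => [/forallP b0|].
    left; exists (fun _ => 0); split => // t; rewrite big_nil; exact/eqP.
  rewrite negb_forall => /existsP [t0 bt0].
  right; exists b; split => //.
  rewrite /fdot (bigD1 t0) //=; apply: ltr_pwDl.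
    by rewrite -expr2 exprn_even_gt0.
  by apply: sumr_ge0 => t _; rewrite -expr2 sqr_ge0.
move=> /andP [js us] a b.
case: (IH us a b) => [[mu [mu0 bE]]|[d [ad bd]]].
  left; exists (fun i => if i == j then 0 else mu i); split.
    by move=> i; case: ifP.
  move=> t; rewrite big_cons eqxx mul0r add0r bE.
  apply: eq_big_seq => i ins; case: eqP => // ij.
  by move: js; rewrite -ij ins.
have [ajd|ajd] := lerP (fdot (a j) d) 0.
  right; exists d; split => // i; rewrite inE => /orP [/eqP ->//|]; exact: ad.
set al := fdot (a j) d.
pose a' i := fun t => a i t - (fdot (a i) d / al) * a j t.
pose b' := fun t => b t - (fdot b d / al) * a j t.
case: (IH us a' b') => [[mu [mu0 bE]]|[d' [ad' bd']]].
  left.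
  exists (fun i => if i == j then (fdot b d - \sum_(i <- s) mu i * fdot (a i) d) / al
                   else mu i); split.
    move=> i; case: ifP => // _; apply: divr_ge0; last exact: ltW.
    rewrite subr_ge0; apply: (le_trans _ (ltW bd)).
    rewrite big_seq_cond; apply: sumr_le0 => k /andP [ins _].
    by rewrite mulr_ge0_le0 // ad.
  move=> t; rewrite big_cons eqxx.
  have -> : \sum_(i <- s) (if i == j then (fdot b d - \sum_(i0 <- s) mu i0 * fdot (a i0) d) / al else mu i) * a i t
     = \sum_(i <- s) mu i * a i t.
    apply: eq_big_seq => i ins; case: eqP => // ij.
    by move: js; rewrite -ij ins.
  have := bE t; rewrite /b' /a' => e.
  have e2 : b t = \sum_(i <- s) mu i * a i t
      + (fdot b d / al - \sum_(i <- s) mu i * (fdot (a i) d / al)) * a j t.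
    have hs : \sum_(i <- s) mu i * (a i t - fdot (a i) d / al * a j t)
       = \sum_(i <- s) mu i * a i t - (\sum_(i <- s) mu i * (fdot (a i) d / al)) * a j t.
      by rewrite mulr_suml -sumrB; apply: eq_bigr => i _; ring.
    move: e; rewrite hs => /eqP; rewrite subr_eq => /eqP ->; ring.
  rewrite e2 addrC; congr (_ + _); congr (_ * _).
  have alnz : al != 0 by rewrite gt_eqF.
  rewrite mulrBl; congr (_ - _); rewrite mulr_suml; apply: eq_bigr => i _.
  by rewrite mulrA.
right; exists (fun t => d' t - (fdot (a j) d' / al) * d t); split.
  move=> i; rewrite inE => /orP [/eqP ->|ins].
    rewrite fdotBr -/al mulfVK ?subrr // gt_eqF //.
  rewrite fdotBr; have := ad' i ins; rewrite /a' fdotBl.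
  by have -> : fdot (a j) d' / al * fdot (a i) d = fdot (a i) d / al * fdot (a j) d' by ring.
rewrite fdotBr; move: bd'; rewrite /b' fdotBl.
by have -> : fdot (a j) d' / al * fdot b d = fdot b d / al * fdot (a j) d' by ring.
Qed.

End Farkas.

Section Basic.
Context {R : realType} {nb : nat}.
Implicit Types (p : 'I_nb -> R * R) (bd : 'I_nb -> bool) (f : 'I_nb -> R).

Lemma em_ep (k : edge nb) : em k != ep k.
Proof.
rewrite /em /ep; case: k => [[i j]] /= ij; apply/eqP => e.
by move: ij; rewrite e ltnn.
Qed.

Lemma sum_pick (a : 'I_nb) (u : 'I_nb -> R) : \sum_i (a == i)%:R * u i = u a.
Proof.
rewrite (bigD1 a) //= eqxx mul1r big1 ?addr0 // => i /negbTE ia.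
by rewrite eq_sym ia mul0r.
Qed.

Lemma sum_incid (k : edge nb) (u : 'I_nb -> R) :
  \sum_i incid k i * u i = Dw u k.
Proof.
rewrite /incid /Dw.
under eq_bigr do rewrite mulrBl.
by rewrite sumrB !sum_pick.
Qed.

Lemma len_gt0 p (k : edge nb) : injective p -> 0 < len p k.
Proof.
move=> pinj; rewrite /len sqrtr_gt0.
have : p (ep k) != p (em k).
  by apply/eqP => /pinj e; move: (em_ep k); rewrite e eqxx.
rewrite /dx /dy; case: (p (ep k)) => x1 y1; case: (p (em k)) => x2 y2 /= ne.
have [hx|hx] := eqVneq x1 x2; have [hy|hy] := eqVneq y1 y2.
- by rewrite hx hy eqxx in ne.
- by rewrite hx subrr expr0n add0r exprn_even_gt0 //= subr_eq0.
- by rewrite hy subrr expr0n addr0 exprn_even_gt0 //= subr_eq0.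
apply: ltr_pwDl; last by rewrite sqr_ge0.
by rewrite exprn_even_gt0 //= subr_eq0.
Qed.

Lemma Bu_sum p u1 u2 (k : edge nb) :
  Bu p u1 u2 k = \sum_i (dx p k / len p k * incid k i * u1 i
                         + dy p k / len p k * incid k i * u2 i).
Proof.
transitivity (dx p k / len p k * \sum_i incid k i * u1 i
   + dy p k / len p k * \sum_i incid k i * u2 i).
  rewrite !sum_incid /Bu /Dw; ring.
rewrite !mulr_sumr -big_split; apply: eq_bigr => i _ /=; ring.
Qed.

Lemma sumBu p (s : edge nb -> R) u1 u2 :
  \sum_k s k * Bu p u1 u2 k = \sum_i (u1 i * B1T p s i + u2 i * B2T p s i).
Proof.
under eq_bigr do rewrite Bu_sum mulr_sumr.
rewrite exchange_big /=; apply: eq_bigr => i _.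
rewrite /B1T /B2T !mulr_sumr -big_split /=; apply: eq_bigr => k _; ring.
Qed.

Lemma sumDw (q : edge nb -> R) (w : 'I_nb -> R) :
  \sum_k q k * Dw w k = \sum_i w i * DT q i.
Proof.
under eq_bigr do rewrite -sum_incid mulr_sumr.
rewrite exchange_big /=; apply: eq_bigr => i _.
rewrite /DT !mulr_sumr; apply: eq_bigr => k _; ring.
Qed.

Lemma sumBu0 p bd (s : edge nb -> R) u1 u2 :
  vanish bd u1 -> vanish bd u2 ->
  (forall i, ~~ bd i -> B1T p s i = 0) -> (forall i, ~~ bd i -> B2T p s i = 0) ->
  \sum_k s k * Bu p u1 u2 k = 0.
Proof.
move=> h1 h2 h3 h4; rewrite sumBu big1 // => i _.
case: (boolP (bd i)) => bi; first by rewrite h1 // h2 // !mul0r addr0.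
by rewrite h3 // h4 // !mulr0 addr0.
Qed.

Lemma sumDw_load bd f (q : edge nb -> R) w :
  vanish bd w -> (forall i, ~~ bd i -> DT q i = f i) ->
  \sum_k q k * Dw w k = loadw bd f w.
Proof.
move=> h1 h2; rewrite sumDw /loadw (bigID bd) /= big1 ?add0r.
  by apply: eq_bigr => i bi; rewrite h2 // mulrC.
by move=> i bi; rewrite h1 // mul0r.
Qed.

End Basic.

Section Scal.
Variable R : realFieldType.

Lemma key_ident (l r s q t2 D : R) : 0 < l -> 0 <= s -> q ^+ 2 <= 2 * r * s ->
  (2 * l * q - s * D) ^+ 2 + s ^+ 2 * (4 * l * t2 - D ^+ 2) <=
  4 * l * s * (2 * l * r + s * t2 - q * D).
Proof.
move=> l0 s0 hq.
have h : 4 * l ^+ 2 * q ^+ 2 <= 4 * l ^+ 2 * (2 * r * s).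
  by rewrite ler_pM2l // mulr_gt0 // exprn_gt0.
rewrite -subr_ge0; rewrite -subr_ge0 in h.
by have -> : 4 * l * s * (2 * l * r + s * t2 - q * D) -
  ((2 * l * q - s * D) ^+ 2 + s ^+ 2 * (4 * l * t2 - D ^+ 2)) =
  4 * l ^+ 2 * (2 * r * s) - 4 * l ^+ 2 * q ^+ 2 by ring.
Qed.

Lemma bar_ge0 (l r s q t2 D : R) : 0 < l -> 0 <= r -> 0 <= s ->
  q ^+ 2 <= 2 * r * s -> D ^+ 2 <= 2 * (2 * l) * t2 ->
  0 <= 2 * l * r + s * t2 - q * D.
Proof.
move=> l0 r0 s0 hq hD.
have [s00|sp] := eqVneq s 0.
  move: hq; rewrite s00 mulr0 => hq.
  have -> : q = 0 by apply/eqP; rewrite -sqrf_eq0 eq_le hq sqr_ge0.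
  rewrite !mul0r subr0 addr0; apply: mulr_ge0 => //.
  by apply: mulr_ge0 => //; exact: ltW.
have spos : 0 < s by rewrite lt_def sp.
have := @key_ident l r s q t2 D l0 s0 hq.
have h1 : 0 <= (2 * l * q - s * D) ^+ 2 + s ^+ 2 * (4 * l * t2 - D ^+ 2).
  apply: addr_ge0; first exact: sqr_ge0.
  apply: mulr_ge0; first exact: sqr_ge0.
  have -> : 4 * l * t2 = 2 * (2 * l) * t2 by ring.
  by rewrite subr_ge0.
move=> h2; have := le_trans h1 h2.
by rewrite pmulr_rge0 // mulr_gt0 // mulr_gt0.
Qed.

Lemma bar_eq0 (l r s q t2 D : R) : 0 < l -> 0 <= r -> 0 <= s ->
  q ^+ 2 <= 2 * r * s -> D ^+ 2 <= 2 * (2 * l) * t2 ->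
  2 * l * r + s * t2 - q * D = 0 ->
  q = s * D / (2 * l) /\ r = s * D ^+ 2 / (8 * l ^+ 2) /\
  (0 < s -> 4 * l * t2 = D ^+ 2).
Proof.
move=> l0 r0 s0 hq hD e.
have l0' : l != 0 by rewrite gt_eqF.
have [s00|sp] := eqVneq s 0.
  move: hq; rewrite s00 mulr0 => hq.
  have q0 : q = 0 by apply/eqP; rewrite -sqrf_eq0 eq_le hq sqr_ge0.
  move: e; rewrite q0 s00 !mul0r subr0 addr0 => /eqP.
  rewrite mulf_eq0 mulf_eq0 pnatr_eq0 /= (negbTE l0') /= => /eqP ->.
  by split; [|split] => //; rewrite ?mul0r // lt_irreflexive.
have spos : 0 < s by rewrite lt_def sp.
have := @key_ident l r s q t2 D l0 s0 hq; rewrite e mulr0 => h.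
have hD' : 0 <= 4 * l * t2 - D ^+ 2.
  have -> : 4 * l * t2 = 2 * (2 * l) * t2 by ring.
  by rewrite subr_ge0.
have a0 : 0 <= (2 * l * q - s * D) ^+ 2 := sqr_ge0 _.
have b0 : 0 <= s ^+ 2 * (4 * l * t2 - D ^+ 2) by rewrite mulr_ge0 // sqr_ge0.
have A0 : (2 * l * q - s * D) ^+ 2 = 0 by apply/eqP; rewrite eq_le a0 andbT; lra.
have B0 : s ^+ 2 * (4 * l * t2 - D ^+ 2) = 0 by apply/eqP; rewrite eq_le b0 andbT; lra.
move/eqP: A0; rewrite sqrf_eq0 subr_eq0 => /eqP A0.
move/eqP: B0; rewrite mulf_eq0 sqrf_eq0 (negbTE sp) /= subr_eq0 => /eqP B0.
have qE : q = s * D / (2 * l).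
  by rewrite -A0; field.
split => //; split => //.
have e' : 2 * l * r = q * D - s * t2 by lra.
have t2E : t2 = D ^+ 2 / (4 * l).
  by rewrite -B0; field.
have -> : r = (q * D - s * t2) / (2 * l) by rewrite -e'; field.
by rewrite qE t2E; field.
Qed.

Definition tau_of (g0 A Q : R) :=
  if g0 == 0 then - A / (Q + 1) else - g0 / (`|A| + Q + 1).

Lemma tau_pos (g0 A Q : R) : g0 <= 0 -> 0 <= Q -> (g0 = 0 -> A < 0) ->
  0 < tau_of g0 A Q.
Proof.
move=> g0n Q0 hA; rewrite /tau_of; case: eqP => [/hA An|gn].
  by apply: divr_gt0; lra.
apply: divr_gt0; last by have := normr_ge0 A; lra.
have : g0 != 0 by apply/eqP.
by rewrite oppr_gt0 lt_neqAle => ->; rewrite g0n.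
Qed.

Lemma pert_step (g0 A Q t : R) : g0 <= 0 -> 0 <= Q -> (g0 = 0 -> A < 0) ->
  0 < t -> t <= 1 -> t <= tau_of g0 A Q -> g0 + t * A + t ^+ 2 * Q <= 0.
Proof.
move=> g0n Q0 hA t0 t1; rewrite /tau_of; case: eqP => [g00|gn].
  move: (hA g00) => An.
  rewrite g00 add0r ler_pdivlMr; last lra.
  move=> h; have : t * Q <= - A by nra.
  nra.
have hAn := normr_ge0 A.
rewrite ler_pdivlMr; last lra.
move=> h.
have h1 : t * A <= t * `|A| by rewrite ler_pM2l // ler_norm.
have h2 : t ^+ 2 * Q <= t * Q by rewrite expr2 -mulrA ler_piMl // mulr_ge0 // ltW.
nra.
Qed.

Lemma g_to_K (l B D : R) : 0 < l -> B + D ^+ 2 / (4 * l) - l <= 0 ->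
  0 <= l - B /\ D ^+ 2 <= 2 * (2 * l) * (l - B).
Proof.
move=> l0 h.
have e : D ^+ 2 = 4 * l * (D ^+ 2 / (4 * l)) by field; rewrite gt_eqF.
have d0 : 0 <= D ^+ 2 / (4 * l) by apply: divr_ge0; [exact: sqr_ge0 | lra].
split; first lra.
rewrite e; have -> : 2 * (2 * l) * (l - B) = 4 * l * (l - B) by ring.
by rewrite ler_pM2l; lra.
Qed.

Lemma K_to_g (l B D : R) : 0 < l -> D ^+ 2 <= 2 * (2 * l) * (l - B) ->
  B + D ^+ 2 / (4 * l) - l <= 0.
Proof.
move=> l0 h.
have : D ^+ 2 / (4 * l) <= l - B.
  rewrite ler_pdivrMr; last lra.
  by have <- : 2 * (2 * l) * (l - B) = (l - B) * (4 * l) by ring.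
lra.
Qed.

Lemma small_t (I : finType) (tau : I -> R) : (forall i, 0 < tau i) ->
  (0 < (1 + \sum_j (tau j)^-1)^-1) /\ ((1 + \sum_j (tau j)^-1)^-1 <= 1) /\
  (forall i, (1 + \sum_j (tau j)^-1)^-1 <= tau i).
Proof.
move=> tp.
have S0 : 0 <= \sum_i (tau i)^-1 by apply: sumr_ge0 => i _; rewrite invr_ge0 ltW.
have P : 0 < 1 + \sum_i (tau i)^-1 by lra.
split; first by rewrite invr_gt0.
split; first by rewrite invf_le1 //; lra.
move=> i; rewrite -[tau i]invrK lef_pV2 ?posrE ?invr_gt0 //.
rewrite (bigD1 i) //=.
have : 0 <= \sum_(j | j != i) (tau j)^-1 by apply: sumr_ge0 => j _; rewrite invr_ge0 ltW.
lra.
Qed.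

End Scal.

Section D.
Context {R : realType} {nb : nat}.
Implicit Types (p : 'I_nb -> R * R) (bd : 'I_nb -> bool) (f : 'I_nb -> R).

Definition T3 := ('I_3 * 'I_nb)%type.
Definition fdot3 (x y : T3 -> R) := \sum_t x t * y t.

Lemma fdot_pair (x y : T3 -> R) :
  fdot3 x y = \sum_(j < 3) \sum_(i < nb) x (j, i) * y (j, i).
Proof. by rewrite pair_bigA; apply: eq_bigr => -[j i]. Qed.

Definition msk bd (d : T3 -> R) (j : 'I_3) : 'I_nb -> R :=
  fun i => if bd i then 0 else d (j, i).

Lemma sum_msk bd (c : R) (k : edge nb) (v : 'I_nb -> R) :
  \sum_i (if bd i then 0 else c * incid k i) * v i =
  c * Dw (fun i => if bd i then 0 else v i) k.
Proof.
rewrite -sum_incid mulr_sumr; apply: eq_bigr => i _.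
by case: (bd i); rewrite ?mul0r ?mulr0 ?mulrA.
Qed.

Definition avec p bd (w : 'I_nb -> R) (k : edge nb) : T3 -> R := fun t =>
  if bd t.2 then 0 else
  if (t.1 : nat) == 0%N then dx p k / len p k * incid k t.2 else
  if (t.1 : nat) == 1%N then dy p k / len p k * incid k t.2 else
  Dw w k / (2 * len p k) * incid k t.2.

Lemma dot_avec p bd w k d :
  fdot3 (avec p bd w k) d =
  Bu p (msk bd d ord0) (msk bd d (lift ord0 ord0)) k
  + Dw w k / (2 * len p k) * Dw (msk bd d (lift ord0 (lift ord0 ord0))) k.
Proof.
rewrite fdot_pair !big_ord_recl big_ord0 /= addr0 /avec /=.
rewrite !sum_msk /Bu /msk; rewrite {1 2}/Dw; ring.
Qed.

Definition bvec bd f : T3 -> R := fun t =>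
  if bd t.2 then 0 else if (t.1 : nat) == 2%N then f t.2 else 0.

Lemma dot_bvec bd f d :
  fdot3 (bvec bd f) d = loadw bd f (msk bd d (lift ord0 (lift ord0 ord0))).
Proof.
rewrite fdot_pair !big_ord_recl big_ord0 /= addr0 /bvec /=.
rewrite [X in X + _]big1; last by move=> i _; case: (bd i); rewrite mul0r.
rewrite add0r [X in X + _]big1; last by move=> i _; case: (bd i); rewrite mul0r.
rewrite !add0r /loadw /msk [RHS]big_mkcond /=; apply: eq_bigr => i _.
by case: (bd i) => /=; rewrite ?mul0r.
Qed.
End D.

Section SD.
Context {R : realType} {nb : nat}.
Implicit Types (p : 'I_nb -> R * R) (bd : 'I_nb -> bool) (f : 'I_nb -> R).

Lemma Bu_lin p x1 x2 y1 y2 (c : R) (k : edge nb) :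
  Bu p (fun i => x1 i + c * y1 i) (fun i => x2 i + c * y2 i) k =
  Bu p x1 x2 k + c * Bu p y1 y2 k.
Proof. rewrite /Bu; ring. Qed.

Lemma Dw_lin (x y : 'I_nb -> R) (c : R) (k : edge nb) :
  Dw (fun i => x i + c * y i) k = Dw x k + c * Dw y k.
Proof. rewrite /Dw; ring. Qed.

Lemma loadw_lin bd f (x y : 'I_nb -> R) (c : R) :
  loadw bd f (fun i => x i + c * y i) = loadw bd f x + c * loadw bd f y.
Proof. rewrite /loadw mulr_sumr -big_split; apply: eq_bigr => i _ /=; ring. Qed.

Lemma strong_dual p bd f u1 u2 w t1 t2 t3 :
  injective p -> PXd_feas bd p u1 u2 w t1 t2 t3 ->
  (forall u1' u2' w' t1' t2' t3', PXd_feas bd p u1' u2' w' t1' t2' t3' ->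
      loadw bd f w' <= loadw bd f w) ->
  exists s' q' r', PX_feas bd p f s' q' r' /\ PX_obj p s' r' = loadw bd f w.
Proof.
move=> pinj [v1 [v2 [vw [t10 [t20 [e2 [e3 [e1 hK]]]]]]]] opt.
have lp k : 0 < len p k := len_gt0 p k pinj.
pose g k := Bu p u1 u2 k + Dw w k ^+ 2 / (4 * len p k) - len p k.
have gle k : g k <= 0.
  have [_ [_ h]] := hK k; apply: K_to_g (lp k) _.
  have -> : len p k - Bu p u1 u2 k = t2 k by rewrite -(e2 k); ring.
  have -> : Dw w k ^+ 2 = t3 k ^+ 2.
    have -> : t3 k = - Dw w k by apply/eqP; rewrite -subr_eq0 opprK (e3 k).
    by rewrite sqrrN.
  by rewrite -e1.
pose act := [seq k <- index_enum (edge nb) | g k == 0].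
have uact : uniq act by rewrite filter_uniq // index_enum_uniq.
case: (@farkas R T3 _ act uact (avec p bd w) (bvec bd f)) => [[mu [mu0 hmu]] | [d [hd hb]]].
  pose lam k := if g k == 0 then mu k else 0.
  have hsum t : bvec bd f t = \sum_k lam k * avec p bd w k t.
    rewrite hmu /act big_filter big_mkcond /=.
    by apply: eq_bigr => k _; rewrite /lam; case: ifP; rewrite ?mul0r.
  have ln0 k : len p k != 0 by rewrite gt_eqF.
  pose q' k := lam k * (Dw w k / (2 * len p k)).
  pose r' k := lam k * (Dw w k ^+ 2 / (8 * len p k ^+ 2)).
  have lam0 k : 0 <= lam k by rewrite /lam; case: ifP.
  have hB1 i : ~~ bd i -> B1T p lam i = 0.
    move=> bi; have := hsum (ord0, i); rewrite /bvec /avec /= (negbTE bi) => /esym h.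
    apply: (etrans _ h); rewrite /B1T; apply: eq_bigr => k _; by rewrite !mulrA.
  have hB2 i : ~~ bd i -> B2T p lam i = 0.
    move=> bi; have := hsum (lift ord0 ord0, i); rewrite /bvec /avec /= (negbTE bi) => /esym h.
    apply: (etrans _ h); rewrite /B2T; apply: eq_bigr => k _; by rewrite !mulrA.
  have hDT i : ~~ bd i -> DT q' i = f i.
    move=> bi; have := hsum (lift ord0 (lift ord0 ord0), i).
    rewrite /bvec /avec /= (negbTE bi) => ->.
    rewrite /DT; apply: eq_bigr => k _; by rewrite /q' !mulrA.
  have hBu0 : \sum_k lam k * Bu p u1 u2 k = 0 := sumBu0 _ _ _ _ _ v1 v2 hB1 hB2.
  have hDw : \sum_k q' k * Dw w k = loadw bd f w := sumDw_load _ _ _ _ vw hDT.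
  exists lam, q', r'; split.
    split => //; split.
      move=> k; apply: mulr_ge0 => //; apply: divr_ge0; first exact: sqr_ge0.
      by apply: mulr_ge0 => //; apply: ltW; apply: exprn_gt0.
    do 3 (split => //).
    move=> k; split.
      apply: mulr_ge0 => //; apply: divr_ge0; first exact: sqr_ge0.
      by apply: mulr_ge0 => //; apply: ltW; apply: exprn_gt0.
    split => //.
    rewrite le_eqVlt; apply/orP; left; apply/eqP; rewrite /q' /r'; field.
    by rewrite ln0.
  rewrite -hDw; transitivity (\sum_k (lam k * Bu p u1 u2 k + q' k * Dw w k)); last first.
    by rewrite big_split /= hBu0 add0r.
  rewrite /PX_obj mulr_sumr -big_split.
  apply: eq_bigr => k _ /=; rewrite /q' /r' /lam.
  case: ifP => [/eqP gk|_]; last ring.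
  have -> : Bu p u1 u2 k = len p k - Dw w k ^+ 2 / (4 * len p k) by move: gk; rewrite /g; lra.
  by field; rewrite ln0.
exfalso.
have ln0 k : len p k != 0 by rewrite gt_eqF.
pose d1 := msk bd d ord0.
pose d2 := msk bd d (lift ord0 ord0).
pose dw := msk bd d (lift ord0 (lift ord0 ord0)).
have hG k : g k = 0 -> Bu p d1 d2 k + Dw w k / (2 * len p k) * Dw dw k <= 0.
  move=> gk; rewrite -dot_avec; apply: hd.
  by rewrite mem_filter gk eqxx mem_index_enum.
have hF : 0 < loadw bd f dw by rewrite -dot_bvec; exact: hb.
pose L := loadw bd f w.
pose F := loadw bd f dw.
pose eps := F / (2 * (`|L| + 1)).
have nL := normr_ge0 L.
have eps0 : 0 < eps by apply: divr_gt0 => //; lra.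
have epsL : eps * L < F.
  have h1 : eps * (2 * (`|L| + 1)) = F by rewrite /eps; field; lra.
  have h2 : eps * L <= eps * `|L| by rewrite ler_pM2l // ler_norm.
  have h3 : 2 * (eps * `|L|) + 2 * eps = F by rewrite -h1; ring.
  have hF2 : 0 < F := hF.
  lra.
pose c1 i := d1 i + (- eps) * u1 i.
pose c2 i := d2 i + (- eps) * u2 i.
pose cw i := dw i + (- eps) * w i.
pose A k := Bu p c1 c2 k + Dw w k / (2 * len p k) * Dw cw k.
pose Q k := Dw cw k ^+ 2 / (4 * len p k).
have Q0 k : 0 <= Q k.
  by apply: divr_ge0; [exact: sqr_ge0 | apply: mulr_ge0 => //; exact: ltW].
have hA k : g k = 0 -> A k < 0.
  move=> gk; have hGk := hG k gk.
  have hBu : Bu p u1 u2 k = len p k - Dw w k ^+ 2 / (4 * len p k) by move: gk; rewrite /g; lra.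
  have P : 0 < eps * (len p k + Dw w k ^+ 2 / (4 * len p k)).
    apply: mulr_gt0 => //; have := lp k.
    have : 0 <= Dw w k ^+ 2 / (4 * len p k) by apply: divr_ge0; [exact: sqr_ge0 | apply: mulr_ge0 => //; exact: ltW].
    lra.
  have -> : A k = (Bu p d1 d2 k + Dw w k / (2 * len p k) * Dw dw k)
      - eps * (len p k + Dw w k ^+ 2 / (4 * len p k)).
    rewrite /A /c1 /c2 /cw Bu_lin Dw_lin hBu; field; exact: ln0.
  lra.
pose tau k := @tau_of R (g k) (A k) (Q k).
have taup k : 0 < tau k := @tau_pos R _ _ _ (gle k) (Q0 k) (hA k).
have [t0 [t1' tt]] := @small_t R _ tau taup.
move: t0 t1' tt; set t := (1 + \sum_j (tau j)^-1)^-1 => t0 t1' tt.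
pose y1 i := u1 i + t * c1 i.
pose y2 i := u2 i + t * c2 i.
pose yw i := w i + t * cw i.
have gy k : Bu p y1 y2 k + Dw yw k ^+ 2 / (4 * len p k) - len p k <= 0.
  have -> : Bu p y1 y2 k + Dw yw k ^+ 2 / (4 * len p k) - len p k
      = g k + t * A k + t ^+ 2 * Q k.
    rewrite /y1 /y2 /yw Bu_lin Dw_lin /g /A /Q; field; exact: ln0.
  exact: (@pert_step R _ _ _ _ (gle k)) (Q0 k) (hA k) t0 t1' (tt k).
have feas : PXd_feas bd p y1 y2 yw (fun k => 2 * len p k)
    (fun k => len p k - Bu p y1 y2 k) (fun k => - Dw yw k).
  have [vy1 [vy2 vyw]] : vanish bd y1 /\ vanish bd y2 /\ vanish bd yw.
    split; [|split] => i bi.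
    - by rewrite /y1 /c1 /d1 /msk bi (v1 i bi) /=; ring.
    - by rewrite /y2 /c2 /d2 /msk bi (v2 i bi) /=; ring.
    - by rewrite /yw /cw /dw /msk bi (vw i bi) /=; ring.
  do 3 (split => //).
  split; first by move=> k; apply: mulr_ge0 => //; exact: ltW.
  split; first by move=> k; have [] := @g_to_K R _ _ _ (lp k) (gy k).
  split; first by move=> k /=; ring.
  split; first by move=> k /=; ring.
  split => // k; split; first by apply: mulr_ge0 => //; exact: ltW.
  have [h1 h2] := @g_to_K R _ _ _ (lp k) (gy k); split => //.
  by rewrite sqrrN.
have := opt _ _ _ _ _ _ feas.
rewrite /yw /cw !loadw_lin -/L -/F.
have : 0 < t * (F + - eps * L) by apply: mulr_gt0 => //; lra.
lra.
Qed.
End SD.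

Section Scal2.
Variable R : realFieldType.

Lemma quad_bound (sh e a E0 lh : R) : 0 < E0 -> 0 < a -> 0 <= sh -> 0 <= lh ->
  lh * (sh * e) - E0 / 2 * (Num.max e 0 ^+ 2 * a * lh) <= sh ^+ 2 / a * lh / (2 * E0).
Proof.
move=> E00 a0 sh0 lh0.
set m := Num.max e 0.
have hm : e <= m by rewrite /m le_max lexx.
have k1 : sh ^+ 2 / a / (2 * E0) - (sh * m - E0 / 2 * (m ^+ 2 * a))
    = (E0 * a * m - sh) ^+ 2 / (2 * E0 * a).
  by field; rewrite !gt_eqF.
have k2 : 0 <= (E0 * a * m - sh) ^+ 2 / (2 * E0 * a).
  by apply: divr_ge0; [exact: sqr_ge0 | apply: mulr_ge0; [apply: mulr_ge0|]; lra].
have k3 : sh * e <= sh * m by rewrite ler_wpM2l.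
have k4 : lh * (sh * e - E0 / 2 * (m ^+ 2 * a)) <= lh * (sh ^+ 2 / a / (2 * E0)).
  by rewrite ler_wpM2l //; lra.
have -> : sh ^+ 2 / a * lh / (2 * E0) = lh * (sh ^+ 2 / a / (2 * E0)) by ring.
apply: le_trans k4; rewrite lerBlDr.
have -> : lh * (sh * e - E0 / 2 * (m ^+ 2 * a)) + E0 / 2 * (m ^+ 2 * a * lh)
  = lh * (sh * e) by ring.
by [].
Qed.

Lemma ehat_le1 (B D l x : R) : 0 < l -> B + D ^+ 2 / (4 * l) - l <= 0 ->
  (B / l + x * (D / l)) / (1 + x ^+ 2) <= 1.
Proof.
move=> l0 h.
have x0 : 0 < 1 + x ^+ 2 by have := sqr_ge0 x; lra.
rewrite ler_pdivrMr // mul1r.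
have hB : B / l <= 1 - (D / l) ^+ 2 / 4.
  have -> : B / l = (B + D ^+ 2 / (4 * l) - l) / l + 1 - (D / l) ^+ 2 / 4.
    by field; rewrite gt_eqF.
  have : (B + D ^+ 2 / (4 * l) - l) / l <= 0 by rewrite pmulr_lle0 // invr_gt0.
  lra.
have sq : 0 <= (x - D / l / 2) ^+ 2 := sqr_ge0 _.
have e3 : 1 + x ^+ 2 = 1 - (D / l) ^+ 2 / 4 + x * (D / l) + (x - D / l / 2) ^+ 2.
  by field; rewrite gt_eqF.
lra.
Qed.

Lemma max_sq (c e : R) : 0 < c -> e <= 1 -> Num.max (c * e) 0 ^+ 2 <= c ^+ 2.
Proof.
move=> c0 e1.
have [h|h] := leP (c * e) 0.
  by rewrite expr0n /= sqr_ge0.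
have ce : c * e <= c by rewrite ger_pMr.
by rewrite ler_sqr ?nnegrE //; [exact: ltW | exact: ltW].
Qed.

End Scal2.

Section W.
Context {R : realType} {nb : nat}.
Implicit Types (p : 'I_nb -> R * R) (bd : 'I_nb -> bool) (f : 'I_nb -> R).

Lemma J2E p (z : 'I_nb -> R) k : Jkk p z k ^+ 2 = 1 + Delta p z k ^+ 2.
Proof. by rewrite /Jkk sqr_sqrtr // addr_ge0 // sqr_ge0. Qed.

Lemma Jgt0 p (z : 'I_nb -> R) k : 0 < Jkk p z k.
Proof. by rewrite /Jkk sqrtr_gt0 ltr_pwDl // sqr_ge0. Qed.

Lemma ehat_scale p (c : R) u1 u2 w z (k : edge nb) :
  ehat p (fun i => c * u1 i) (fun i => c * u2 i) (fun i => c * w i) z k =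
  c * ehat p u1 u2 w z k.
Proof. rewrite /ehat /strain /Delta /Bu /Dw; ring. Qed.

Lemma loadw_scale bd f (c : R) (w : 'I_nb -> R) :
  loadw bd f (fun i => c * w i) = c * loadw bd f w.
Proof. rewrite /loadw mulr_sumr; apply: eq_bigr => i _; ring. Qed.

Lemma weak_stress p bd f E0 (z : 'I_nb -> R) (a sh : edge nb -> R) U1 U2 W :
  injective p -> 0 < E0 -> (forall k, 0 <= a k) -> stress_feas bd p f z sh ->
  vanish bd U1 -> vanish bd U2 -> vanish bd W ->
  ((disp_obj bd p f E0 z a U1 U2 W)%:E <= stress_obj p E0 z a sh)%E.
Proof.
move=> pinj E00 a0 [sh0 /= [hB1 [hB2 hDT]]] vU1 vU2 vW.
have lp k : 0 < len p k := len_gt0 p k pinj.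
have key : loadw bd f W = \sum_k sh k * lhat p z k * ehat p U1 U2 W z k.
  rewrite -(sumDw_load _ _ _ _ vW hDT).
  transitivity (\sum_k ((sh k / Jkk p z k) * Bu p U1 U2 k
                        + (Delta p z k * sh k / Jkk p z k) * Dw W k)).
    by rewrite big_split /= (sumBu0 _ _ _ _ _ vU1 vU2 hB1 hB2) add0r.
  apply: eq_bigr => k _.
  rewrite /lhat /ehat /strain -J2E {3}/Delta.
  have := Jgt0 p z k; have := lp k => l0 J0.
  by field; rewrite !gt_eqF.
rewrite /disp_obj key /stress_obj mulr_sumr -sumrB -sumEFin.
apply: lee_sum => k _.
rewrite /stress_term; case: eqP => [ak0|akn].
  case: eqP => [sh00|shn]; last by rewrite leey.
  by rewrite lee_fin sh00 ak0 !(mulr0, mul0r) subr0.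
have apos : 0 < a k by rewrite lt_def a0 andbT; apply/eqP.
have lh0 : 0 <= lhat p z k by rewrite /lhat mulr_ge0 // ltW // ?Jgt0 ?lp.
rewrite lee_fin.
have -> : sh k * lhat p z k * ehat p U1 U2 W z k = lhat p z k * (sh k * ehat p U1 U2 W z k)
  by ring.
exact: quad_bound.
Qed.

End W.

Theorem theorem6p3 (R : realType) (Omega : set (R * R)) (nb : nat)
  (p : 'I_nb -> R * R) (bd : 'I_nb -> bool) (f : 'I_nb -> R) (E0 V0 : R)
  (s q r : edge nb -> R) (u1 u2 w : 'I_nb -> R) :
  (* Omega is a bounded domain in R^2 *)
  open Omega -> connected Omega -> Omega !=set0 ->
  (exists M : R, forall x, Omega x -> `|x.1| <= M /\ `|x.2| <= M) ->
  (* X = p('I_nb) is a finite subset of the closure of Omega *)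
  injective p -> (forall i, closure Omega (p i)) ->
  (* bd marks the points of X on the boundary of Omega *)
  (forall i, bd i <-> (closure Omega `\` interior Omega) (p i)) ->
  (* X \ dOmega is in the interior of conv(X cap dOmega) *)
  (forall i, ~~ bd i -> interior (conv_pts bd p) (p i)) ->
  0 < E0 -> 0 < V0 -> 0 < ZX bd p f ->
  PX_solves bd p f s q r -> PXd_solves bd p f u1 u2 w ->
  let Z := ZX bd p f in
  let z := fun i => w i / 2 in
  let a := fun k => V0 / Z * Jkk p z k * s k in
  let c := Z / (E0 * V0) in
  let u1el := fun i => c * u1 i in
  let u2el := fun i => c * u2 i in
  let wel := fun i => c * w i in
  let sh := fun k => Jkk p z k * s k in
  MCGS_solves bd p f E0 V0 z a /\
  Cmin bd p f E0 V0 = (Z ^+ 2 / (2 * E0 * V0))%:E /\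
  disp_solves bd p f E0 z a u1el u2el wel /\
  stress_solves bd p f E0 z a sh /\
  (forall k, a k != 0 -> ehat p u1el u2el wel z k = c) /\
  (forall k, sh k = (E0 * a k) * ehat p u1el u2el wel z k).
Proof.
move=> _ _ _ _ pinj _ _ _ E00 V00 Z0 [sfeas sopt] [t1 [t2 [t3 [dfeas dopt]]]].
move=> Z z a c u1el u2el wel sh.
have lp k : 0 < len p k := len_gt0 p k pinj.
have ln0 k : len p k != 0 by rewrite gt_eqF.
have [s' [q' [r' [feas' obj']]]] := strong_dual _ _ _ _ _ _ _ _ _ pinj dfeas dopt.
set L := loadw bd f w in obj'.
have objle : PX_obj p s r <= L by rewrite -obj'; exact: (sopt _ _ _ feas').
case: (dfeas) => [v1 [v2 [vw [t10 [t20 [e2 [e3 [e1 hK]]]]]]]].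
case: (sfeas) => [s0 [r0 [hB1 [hB2 [hDT hKs]]]]].
have t3E k : t3 k = - Dw w k by apply/eqP; rewrite -subr_eq0 opprK (e3 k).
have t2E k : t2 k = len p k - Bu p u1 u2 k by rewrite -(e2 k); ring.
have hDk k : Dw w k ^+ 2 <= 2 * (2 * len p k) * (len p k - Bu p u1 u2 k).
  by have [_ [_ h]] := hK k; rewrite -sqrrN -t3E -e1 -t2E.
have gle k : Bu p u1 u2 k + Dw w k ^+ 2 / (4 * len p k) - len p k <= 0.
  exact: (@K_to_g R _ _ _ (lp k) (hDk k)).
pose term k := 2 * len p k * r k + s k * (len p k - Bu p u1 u2 k) - q k * Dw w k.
have hB0 : \sum_k s k * Bu p u1 u2 k = 0 := sumBu0 _ _ _ _ _ v1 v2 hB1 hB2.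
have hD : \sum_k q k * Dw w k = L := sumDw_load _ _ _ _ vw hDT.
have hsum : \sum_k term k = PX_obj p s r - L.
  have -> : \sum_k term k = \sum_k (len p k * s k + 2 * (len p k * r k))
      - \sum_k (s k * Bu p u1 u2 k + q k * Dw w k).
    by rewrite -sumrB; apply: eq_bigr => k _; rewrite /term; ring.
  by rewrite !big_split /= hB0 hD /PX_obj mulr_sumr add0r.
have tnn k : 0 <= term k.
  have [_ [_ hq]] := hKs k.
  exact: (@bar_ge0 R _ _ _ _ _ _ (lp k) (r0 k) (s0 k) hq (hDk k)).
have sum0 : \sum_k term k = 0.
  apply/eqP; rewrite eq_le; apply/andP; split; last by apply: sumr_ge0.
  by rewrite hsum subr_le0.
have objeq : PX_obj p s r = L by apply/eqP; rewrite -subr_eq0 -hsum sum0.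
have ZE : Z = PX_obj p s r.
  rewrite /Z /ZX; apply/eqP; rewrite eq_le; apply/andP; split.
    apply: ge_inf; first by exists (PX_obj p s r) => x [s1 [q1 [r1 [fe ->]]]]; exact: (sopt _ _ _ fe).
    by exists s, q, r.
  apply: lb_le_inf; first by exists (PX_obj p s r), s, q, r.
  by move=> x [s1 [q1 [r1 [fe ->]]]]; exact: (sopt _ _ _ fe).
have ZL : Z = L by rewrite ZE.
have term0 : forall k, term k = 0.
  move=> k; have := psumr_eq0P (fun k _ => tnn k) sum0; apply => //.
have cs k := @bar_eq0 R _ _ _ _ _ _ (lp k) (r0 k) (s0 k) (proj2 (proj2 (hKs k))) (hDk k)
                     (term0 k).
have Zp : 0 < Z := Z0.
have cp : 0 < c by rewrite /c divr_gt0 // mulr_gt0.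
have Dz k : Dw z k = Dw w k / 2 by rewrite /Dw /z; ring.
have Dlz k : Delta p z k = Dw w k / (2 * len p k).
  by rewrite /Delta Dz; field; rewrite ln0.
have hSJ : \sum_k s k * len p k * Jkk p z k ^+ 2 = Z.
  rewrite ZE /PX_obj mulr_sumr -big_split; apply: eq_bigr => k _ /=.
  have [_ [rE _]] := cs k.
  by rewrite J2E Dlz rE; field; rewrite ln0.
have a0 k : 0 <= a k.
  by rewrite /a; apply: mulr_ge0 => //; apply: mulr_ge0; [apply: divr_ge0; exact: ltW | exact: ltW (Jgt0 _ _ _)].
have as0 k : a k = 0 -> s k = 0.
  move=> /eqP; rewrite /a !mulf_eq0 => /orP [/orP [/orP [|]|]|/eqP //].
  - by rewrite gt_eqF.
  - by rewrite invr_eq0 gt_eqF.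
  - by rewrite gt_eqF // Jgt0.
have asp k : a k != 0 -> 0 < s k.
  move=> akn; rewrite lt_def s0 andbT; apply/eqP => sk0.
  by move/eqP: akn; rewrite /a sk0 mulr0.
have hvol : \sum_k a k * lhat p z k = V0.
  transitivity (V0 / Z * \sum_k s k * len p k * Jkk p z k ^+ 2).
    by rewrite mulr_sumr; apply: eq_bigr => k _; rewrite /a /lhat; ring.
  by rewrite hSJ; field; rewrite gt_eqF.
have ehatc k : a k != 0 -> ehat p u1el u2el wel z k = c.
  move=> akn; have sp := asp k akn.
  have [_ [_ h4]] := cs k; have hB := h4 sp.
  have BuE : Bu p u1 u2 k = len p k - Dw w k ^+ 2 / (4 * len p k).
    by rewrite -hB; field; rewrite ln0.
  rewrite ehat_scale /ehat /strain Dlz /Delta BuE.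
  have P : 0 < 1 + (Dw w k / (2 * len p k)) ^+ 2 by rewrite ltr_pwDl // sqr_ge0.
  have e : (len p k - Dw w k ^+ 2 / (4 * len p k)) / len p k +
    Dw w k / (2 * len p k) * (Dw w k / len p k) = 1 + (Dw w k / (2 * len p k)) ^+ 2.
    by field; rewrite ln0.
  by rewrite e divff ?mulr1 // gt_eqF.
have vz : vanish bd z by move=> i bi; rewrite /z vw // mul0r.
have vu1el : vanish bd u1el by move=> i bi; rewrite /u1el v1 // mulr0.
have vu2el : vanish bd u2el by move=> i bi; rewrite /u2el v2 // mulr0.
have vwel : vanish bd wel by move=> i bi; rewrite /wel vw // mulr0.
have shfeas : stress_feas bd p f z sh.
  split; first by move=> k; rewrite /sh mulr_ge0 // ltW // Jgt0.
  have fs : (fun k => sh k / Jkk p z k) = s.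
    by apply: funext => k; rewrite /sh mulrAC divff ?mul1r // gt_eqF // Jgt0.
  have fq : (fun k => Delta p z k * sh k / Jkk p z k) = q.
    apply: funext => k; have [qE _] := cs k; rewrite qE /sh Dlz.
    by field; rewrite ln0 gt_eqF // Jgt0.
  by rewrite /= fs fq.
have sobj : stress_obj p E0 z a sh = (Z ^+ 2 / (2 * E0 * V0))%:E.
  rewrite /stress_obj (eq_bigr (fun k => (s k * len p k * Jkk p z k ^+ 2 * (Z / (2 * E0 * V0)))%:E)); last first.
    move=> k _; rewrite /stress_term; case: eqP => [ak0|akn].
      have sk0 := as0 k ak0.
      by rewrite /sh sk0 mulr0 eqxx !mul0r.
    have sp := asp k (introN eqP akn).
    congr (_%:E); rewrite /sh /a /lhat; field.
    by rewrite !gt_eqF // Jgt0.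
  by rewrite sumEFin -mulr_suml hSJ; congr (_%:E); field; rewrite !gt_eqF.
have hLw : loadw bd f wel = c * L by rewrite /wel loadw_scale.
have hpen : \sum_k Num.max (ehat p u1el u2el wel z k) 0 ^+ 2 * a k * lhat p z k = c ^+ 2 * V0.
  rewrite -hvol mulr_sumr; apply: eq_bigr => k _.
  have [ak0|akn] := eqVneq (a k) 0.
    by rewrite ak0 !(mulr0, mul0r).
  by rewrite ehatc // max_l ?ltW //; ring.
have dval : disp_obj bd p f E0 z a u1el u2el wel = Z ^+ 2 / (2 * E0 * V0).
  by rewrite /disp_obj hLw hpen -ZL /c; field; rewrite !gt_eqF.
have lowb z' a' : MCGS_feas bd p V0 z' a' ->
    Z ^+ 2 / (2 * E0 * V0) <= disp_obj bd p f E0 z' a' u1el u2el wel.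
  move=> [vz' [a0' vol']].
  have pen : \sum_k Num.max (ehat p u1el u2el wel z' k) 0 ^+ 2 * a' k * lhat p z' k
      <= c ^+ 2 * V0.
    apply: (@le_trans _ _ (\sum_k c ^+ 2 * (a' k * lhat p z' k))).
      apply: ler_sum => k _.
      rewrite /u1el /u2el /wel ehat_scale -mulrA ler_wpM2r //.
        by rewrite mulr_ge0 // /lhat mulr_ge0 // ltW // ?Jgt0 ?lp.
      apply: max_sq => //.
      rewrite /ehat /strain /Delta; exact: (@ehat_le1 R _ _ _ _ (lp k) (gle k)).
    by rewrite -mulr_sumr ler_wpM2l // sqr_ge0.
  rewrite /disp_obj hLw -ZL.
  have : E0 / 2 * (\sum_k Num.max (ehat p u1el u2el wel z' k) 0 ^+ 2 * a' k * lhat p z' k)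
      <= E0 / 2 * (c ^+ 2 * V0) by rewrite ler_wpM2l // divr_ge0 // ltW.
  have -> : Z ^+ 2 / (2 * E0 * V0) = c * Z - E0 / 2 * (c ^+ 2 * V0).
    by rewrite /c; field; rewrite !gt_eqF.
  lra.
have CXzE : CX bd p f E0 z a = (Z ^+ 2 / (2 * E0 * V0))%:E.
  apply/eqP; rewrite eq_le; apply/andP; split.
    apply: ge_ereal_sup => x [U1 [U2 [W [vU1 [vU2 [vW ->]]]]]].
    rewrite -sobj; exact: (weak_stress _ _ _ _ _ _ _ _ _ _ pinj E00 a0 shfeas vU1 vU2 vW).
  apply: ereal_sup_ubound; exists u1el, u2el, wel; do 3 (split => //).
  by rewrite dval.
have feas_za : MCGS_feas bd p V0 z a by split => //; split => //; rewrite hvol.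
have lowCX z' a' : MCGS_feas bd p V0 z' a' -> ((Z ^+ 2 / (2 * E0 * V0))%:E <= CX bd p f E0 z' a')%E.
  move=> fe'; rewrite /CX; apply: le_ereal_sup_tmp.
  exists (disp_obj bd p f E0 z' a' u1el u2el wel)%:E; last by rewrite lee_fin lowb.
  by exists u1el, u2el, wel; do 3 (split => //).
split.
  split => // z' a' fe'; rewrite CXzE; exact: lowCX.
split.
  apply/eqP; rewrite eq_le; apply/andP; split.
    apply: ge_ereal_inf; exists (CX bd p f E0 z a); last by rewrite CXzE.
    by exists z, a.
  by apply: le_ereal_inf_tmp => x [z' [a' [fe' ->]]]; exact: lowCX.
split.
  do 3 (split => //).
  move=> U1 U2 W vU1 vU2 vW; rewrite dval -lee_fin -sobj.
  exact: (weak_stress _ _ _ _ _ _ _ _ _ _ pinj E00 a0 shfeas vU1 vU2 vW).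
split.
  split => // sh' fe'; rewrite sobj -dval.
  exact: (weak_stress _ _ _ _ _ _ _ _ _ _ pinj E00 a0 fe' vu1el vu2el vwel).
split => // k.
have [ak0|akn] := eqVneq (a k) 0.
  by rewrite ak0 /sh (as0 k ak0) !(mulr0, mul0r).
have sp := asp k akn.
rewrite ehatc // /sh /a /c; field.
by rewrite !gt_eqF // Jgt0.
Qed.
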